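(* Let $f$ be any WTP function, $\tilde f$ its concave relaxation, and $\widetilde F(\tilde x)=\max_{\tilde y\in\widetilde{\mathcal{Y}}_{\mathcal{M}}(\tilde x)}\tilde f(\tilde y)$. Then $\widetilde F$ is concave on $\widetilde{\mathcal{X}}_\ell$.
   Context: $\mathcal{M}$ is a matroid on $[n]$ with matroid polytope $\mathcal{P}(\mathcal{M})$ (convex hull of characteristic vectors of independent sets). $\widetilde{\mathcal{X}}_\ell=\{\tilde x\in[0,1]^n:\sum_i\tilde x_i\le\ell\}$ and $\widetilde{\mathcal{Y}}_{\mathcal{M}}(\tilde x)=\{\tilde y\in[0,1]^n:\tilde y\in\mathcal{P}(\mathcal{M}),\tilde y\le\tilde x\}$. A WTP function is $f(y)=\sum_{j\in\mathcal{C}}c_j\min\{b_j,y\cdot w_j\}$ for $y\in\{0,1\}^n$, with finite $\mathcal{C}$, $c_j>0$, $b_j\in\mathbb{R}_{\ge0}\cup\{\infty\}$, $w_j\in\mathbb{R}^n_{\ge0}$; its concave relaxation $\tilde f$ is the same formula for $y\in[0,1]^n$. *)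

(* Defs.v *)
From HB Require Import structures.
From mathcomp Require Import classical_sets reals.
From mathcomp Require Import all_boot all_order all_algebra.
Set Implicit Arguments. Unset Strict Implicit. Unset Printing Implicit Defensive.
Import Order.TTheory GRing.Theory Num.Theory.
Local Open Scope ring_scope.


Definition is_matroid (n : nat) (ind : pred {set 'I_n}) : Prop :=
  [/\ ind set0,
      (forall A B : {set 'I_n}, A \subset B -> ind B -> ind A) &
      (forall A B : {set 'I_n}, ind A -> ind B -> (#|A| < #|B|)%N ->
         exists2 e, e \in B :\: A & ind (e |: A))].

Definition chi (R : pzRingType) (n : nat) (S : {set 'I_n}) : 'I_n -> R :=
  fun i => (i \in S)%:R.

Definition in_matroid_polytope (R : realType) (n : nat) (ind : pred {set 'I_n})
    (y : 'I_n -> R) : Prop :=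
  exists lam : {set 'I_n} -> R,
    [/\ (forall S, 0 <= lam S),
        (forall S, ~~ ind S -> lam S = 0),
        \sum_(S : {set 'I_n}) lam S = 1 &
        (forall i, y i = \sum_(S : {set 'I_n}) lam S * chi R S i)].

Definition Xtilde (R : realType) (n ell : nat) : set ('I_n -> R) :=
  [set x | (forall i, 0 <= x i <= 1) /\ \sum_i x i <= ell%:R]%classic.

Definition Ytilde (R : realType) (n : nat) (ind : pred {set 'I_n})
    (x : 'I_n -> R) : set ('I_n -> R) :=
  [set y | (forall i, 0 <= y i <= 1) /\ in_matroid_polytope ind y
           /\ (forall i, y i <= x i)]%classic.

Definition dotv (R : pzRingType) (n : nat) (y w : 'I_n -> R) : R :=
  \sum_i y i * w i.

(* Concave relaxation of the WTP function with m clauses indexed by 'I_m: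
   f(y) = sum_j c_j min{b_j, y.w_j};  b j = None encodes b_j = +infinity. *)
Definition wtp (R : realType) (n m : nat) (c : 'I_m -> R) (b : 'I_m -> option R)
    (w : 'I_m -> 'I_n -> R) (y : 'I_n -> R) : R :=
  \sum_j c j * (match b j with
                | Some bj => Num.min bj (dotv y (w j))
                | None => dotv y (w j)
                end).

Definition wtp_params (R : realType) (n m : nat) (c : 'I_m -> R)
    (b : 'I_m -> option R) (w : 'I_m -> 'I_n -> R) : Prop :=
  [/\ (forall j, 0 < c j),
      (forall j bj, b j = Some bj -> 0 <= bj) &
      (forall j i, 0 <= w j i)].

(* F~(x) = max_{y in Y_M(x)} f~(y) (the max is attained, so it equals the sup). *)
Definition Ftilde (R : realType) (n m : nat) (ind : pred {set 'I_n})
    (c : 'I_m -> R) (b : 'I_m -> option R) (w : 'I_m -> 'I_n -> R)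
    (x : 'I_n -> R) : R :=
  sup [set wtp c b w y | y in Ytilde ind x]%classic.

(* Main.v *)
Require Import Defs.
From HB Require Import structures.
From mathcomp Require Import classical_sets reals.
From mathcomp Require Import all_boot all_order all_algebra.
From mathcomp Require Import ring lra.
Import Order.TTheory GRing.Theory Num.Theory.
Local Open Scope ring_scope.

Lemma scale_sup (R : realType) (A : set R) (s K : R) :
  (A !=set0)%classic -> 0 <= s -> (forall a, A a -> s * a <= K) -> s * sup A <= K.
Proof.
move=> [a0 Aa0] s0 H.
case: (eqVneq s 0) => [s0'|sn0].
  by rewrite s0' mul0r; have := H _ Aa0; rewrite s0' mul0r.
have sp : 0 < s by rewrite lt_def sn0 s0.
rewrite mulrC -ler_pdivlMr //.
apply: ge_sup; first by exists a0.
move=> a Aa; rewrite ler_pdivlMr // mulrC; exact: H.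
Qed.

Lemma dotv_comb (R : realType) n (y1 y2 w : 'I_n -> R) t :
  dotv (fun i => t * y1 i + (1 - t) * y2 i) w = t * dotv y1 w + (1 - t) * dotv y2 w.
Proof.
rewrite /dotv !mulr_sumr -big_split; apply: eq_bigr => i _ /=; ring.
Qed.

Lemma wtp_concave (R : realType) n m (c : 'I_m -> R) b w (y1 y2 : 'I_n -> R) t :
  (forall j, 0 < c j) -> 0 <= t <= 1 ->
  t * wtp c b w y1 + (1 - t) * wtp c b w y2 <=
  wtp c b w (fun i => t * y1 i + (1 - t) * y2 i).
Proof.
move=> hc /andP[t0 t1].
rewrite /wtp !mulr_sumr -big_split; apply: ler_sum => j _ /=.
rewrite dotv_comb; have cj := hc j.
case: (b j) => [bj|]; last by rewrite le_eqVlt; apply/orP; left; apply/eqP; ring.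
set d1 := dotv y1 (w j); set d2 := dotv y2 (w j).
have h1 : Num.min bj d1 <= bj by rewrite ge_min lexx.
have h2 : Num.min bj d2 <= bj by rewrite ge_min lexx.
have h3 : Num.min bj d1 <= d1 by rewrite ge_min lexx orbT.
have h4 : Num.min bj d2 <= d2 by rewrite ge_min lexx orbT.
have : t * Num.min bj d1 + (1 - t) * Num.min bj d2 <= Num.min bj (t * d1 + (1 - t) * d2).
  rewrite le_min; apply/andP; split; nra.
nra.
Qed.

Lemma Y_comb (R : realType) n (ind : pred {set 'I_n}) (x1 x2 y1 y2 : 'I_n -> R) t :
  0 <= t <= 1 -> Ytilde ind x1 y1 -> Ytilde ind x2 y2 ->
  Ytilde ind (fun i => t * x1 i + (1 - t) * x2 i) (fun i => t * y1 i + (1 - t) * y2 i).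
Proof.
move=> /andP[t0 t1] [b1 [[l1 [l10 l1i l1s l1y]] le1]] [b2 [[l2 [l20 l2i l2s l2y]] le2]].
split; [|split].
- move=> i; have /andP[a1 a2] := b1 i; have /andP[a3 a4] := b2 i.
  apply/andP; split; nra.
- exists (fun S => t * l1 S + (1 - t) * l2 S); split.
  + move=> S; have := l10 S; have := l20 S; nra.
  + by move=> S hS; rewrite l1i // l2i // !mulr0 addr0.
  + by rewrite big_split /= -!mulr_sumr l1s l2s; ring.
  + move=> i; rewrite l1y l2y !mulr_sumr -big_split; apply: eq_bigr => S _ /=; ring.
- move=> i; have := le1 i; have := le2 i; nra.
Qed.

Lemma Y_ne (R : realType) n (ind : pred {set 'I_n}) (x : 'I_n -> R) :
  is_matroid ind -> (forall i, 0 <= x i) -> Ytilde ind x (fun=> 0).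
Proof.
move=> [i0 _ _] hx; split; [|split] => //.
- by move=> i; rewrite lexx ler01.
- exists (fun S => (S == set0)%:R); split.
  + by move=> S; rewrite ler0n.
  + by move=> S hS; case: eqP => // E; rewrite E i0 in hS.
  + by rewrite (bigD1 set0) //= eqxx big1 ?addr0 // => S /negbTE ->.
  + move=> i; rewrite (bigD1 set0) //= big1 ?addr0.
      by rewrite /chi in_set0 mulr0.
    by move=> S /negbTE ->; rewrite mul0r.
Qed.

Lemma wtp_bound (R : realType) n m (c : 'I_m -> R) b w (y : 'I_n -> R) :
  wtp_params c b w -> (forall i, 0 <= y i <= 1) ->
  wtp c b w y <= \sum_j c j * \sum_i w j i.
Proof.
move=> [hc _ hw] hy; apply: ler_sum => j _.
apply: ler_wpM2l; first exact: ltW.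
have hd : dotv y (w j) <= \sum_i w j i.
  apply: ler_sum => i _; have /andP[a1 a2] := hy i; have := hw j i; nra.
case: (b j) => [bj|//]; apply: le_trans hd; by rewrite ge_min lexx orbT.
Qed.

Theorem lemma16 (R : realType) (n : nat) (ind : pred {set 'I_n})
    (hM : is_matroid ind) (ell m : nat) (c : 'I_m -> R)
    (b : 'I_m -> option R) (w : 'I_m -> 'I_n -> R)
    (hf : wtp_params c b w) :
  forall (x1 x2 : 'I_n -> R) (t : R),
    Xtilde (R:=R) ell x1 -> Xtilde (R:=R) ell x2 -> 0 <= t <= 1 ->
    t * Ftilde ind c b w x1 + (1 - t) * Ftilde ind c b w x2
      <= Ftilde ind c b w (fun i => t * x1 i + (1 - t) * x2 i).
Proof.
move=> x1 x2 t [X1 _] [X2 _] ht.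
have ht' := ht; move/andP: ht' => [t0 t1].
have hx1 : forall i, 0 <= x1 i by move=> i; have /andP[] := X1 i.
have hx2 : forall i, 0 <= x2 i by move=> i; have /andP[] := X2 i.
have hc : forall j, 0 < c j by case: hf.
rewrite /Ftilde.
set C := (X in _ <= sup X).
have hC : has_sup C.
  split.
    exists (wtp c b w (fun=> 0)); exists (fun=> 0) => //.
    apply: Y_ne => // i; have := hx1 i; have := hx2 i; nra.
  exists (\sum_j c j * \sum_i w j i) => _ [y [hy _] <-].
  exact: wtp_bound.
have key : forall y1 y2, Ytilde ind x1 y1 -> Ytilde ind x2 y2 ->
    t * wtp c b w y1 + (1 - t) * wtp c b w y2 <= sup C.
  move=> y1 y2 hy1 hy2; apply: le_trans (@wtp_concave R n m c b w y1 y2 t hc ht) _.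
  apply: sup_upper_bound => //; eexists; last reflexivity.
  exact: Y_comb.
suff : t * sup [set wtp c b w y | y in Ytilde ind x1]%classic
   <= sup C - (1 - t) * sup [set wtp c b w y | y in Ytilde ind x2]%classic by lra.
apply: scale_sup => //.
  by exists (wtp c b w (fun=> 0)); exists (fun=> 0) => //; apply: Y_ne.
move=> _ [y1 hy1 <-].
suff : (1 - t) * sup [set wtp c b w y | y in Ytilde ind x2]%classic
   <= sup C - t * wtp c b w y1 by lra.
apply: scale_sup; last 2 first.
- lra.
- move=> _ [y2 hy2 <-]; have := key _ _ hy1 hy2; lra.
by exists (wtp c b w (fun=> 0)); exists (fun=> 0) => //; apply: Y_ne.
Qed.
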